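(* Let $T$ be a transformer over $\Sigma$ (fixed precision, no positional encoding, soft attention, strict future masking, with layer normalization) as defined in the context. Then each of the maps $\bar w\mapsto H^{(\ell)}(\bar w)$, $\ell\in\{0,0.5,1,\dots,L\}$, and the output map $\bar w\mapsto o(\bar w)$ is simulated by $\mathbf{PFO}^2$ over $\bar\Sigma$. In particular, the language recognized by $T$ equals $\{w\in\Sigma^*:\bar w\models\sigma\}$ for some $\mathbf{PFO}^2$ sentence $\sigma$ over $\bar\Sigma$.
   Context: Fixed precision: $\mathbb{F}$ is a fixed finite set of floating-point values containing $0,1,-1,\infty,-\infty$; every arithmetic operation used below ($+,\cdot,/,\sqrt{\cdot},\exp,\mathrm{ReLU}$, finite sums, layer normalization) returns a value in $\mathbb{F}$, with conventions $\infty+f=\infty$, $-\infty+f=-\infty$ for $f\ne\mp\infty$; $f\cdot(\pm\infty)=\pm\infty$ for $f>0$ and $=\mp\infty$ for $f<0$; $f/\infty=0$ for finite $f$; $\exp(\infty)=\infty$, $\exp(-\infty)=0$. Under fixed precision the weights $\alpha_{n,\cdot}$ produced by softmax at any position have at most $N_{\max}=\lfloor \min(1,\max(\mathbb{F}\setminus\{\infty\}))/\min(\mathbb{F}_{>0})\rfloor$ nonzero entries, and a sum of nonnegative elements of $\mathbb{F}$ is determined by how many summands take each value, counted up to a fixed threshold. Given a finite alphabet $\Sigma$ and fresh symbol $\mathrm{EOS}\notin\Sigma$, put $\bar\Sigma=\Sigma\cup\{\mathrm{EOS}\}$ and for $w=w_1\cdots w_N\in\Sigma^*$ let $\bar w=w_1\cdots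 w_Nw_{N+1}$ with $w_{N+1}=\mathrm{EOS}$. A transformer of width $D$ and depth $L$ (all parameters with entries in $\mathbb{F}$) maps $\bar w$ to matrices $H^{(\ell)}(\bar w)\in\mathbb{F}^{D\times(N+1)}$, $\ell\in\{0,0.5,1,\dots,L\}$: $H^{(0)}_{:,n}=e(w_n)$ for an embedding $e:\bar\Sigma\to\mathbb{F}^D$; for $\ell=0,\dots,L-1$, $H^{(\ell+0.5)}=\mathrm{LN}(A^{(\ell)}(H^{(\ell)})+H^{(\ell)})$ and $H^{(\ell+1)}=\mathrm{LN}(F^{(\ell)}(H^{(\ell+0.5)})+H^{(\ell+0.5)})$, where $\mathrm{LN}$ is columnwise layer normalization, $F^{(\ell)}(H)_{:,n}=W^{F2}\mathrm{ReLU}(W^{F1}H_{:,n}+b^{F1})+b^{F2}$, and the single-head soft attention is $Q=W^QH$, $K=W^KH$, $V=W^VH$, $S_{n,m}=Q_{:,n}\cdot K_{:,m}/\sqrt D$, $\alpha_{n,m}=\exp(S_{n,m})/\sum_{i<n}\exp(S_{n,i})$, $A(H)_{:,n}=\sum_{m<n}\alpha_{n,m}V_{:,m}$ (strict future masking). The output is $o(\bar w)=\theta^\top H^{(L)}_{:,N+1}+b$; $w$ is accepted iff $o(\bar w)>0$, and the recognized language is the set of accepted strings. $\mathbf{PFO}^2$ over an alphabet $\Gamma$: formulas in the two variables $x,y$ (re-quantifiable), atomic formulas $\pi_a(z)$ ($a\in\Gamma$) and $z<z'$, closed under $\wedge,\neg$, $\exists y<x:\phi(x,y)$, $\exists x<y:\phi(x,y)$,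 and, for $\phi(x)$ with only free variable $x$, $\exists x<y:\phi(x)$ and $\exists x:\phi(x)$ (and symmetrically in $x,y$); standard semantics over positions of a string; a sentence $\sigma$ has no free variables. A map $G$ assigning to every $\bar w$ ($w\in\Sigma^*$ of any length $N$) a matrix $G(\bar w)\in\mathbb{F}^{D\times(N+1)}$ is simulated by $\mathbf{PFO}^2$ if for every $d\in\{1,\dots,D\}$ and $f\in\mathbb{F}$ there is a $\mathbf{PFO}^2$ formula $\phi(x)$ over $\bar\Sigma$ with one free variable such that for all $w$ and all $n\in\{1,\dots,N+1\}$: $G_{d,n}(\bar w)=f$ iff $\bar w,n\models\phi(x)$ (for a scalar output $o(\bar w)$, take $n=N+1$). *)

(* Defs.v *)
From mathcomp Require Import all_boot.

Set Implicit Arguments.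
Unset Strict Implicit.
Unset Printing Implicit Defensive.

(* A finite set of floating-point values with distinguished elements
   0, 1, -1, +oo, -oo, an order, and the arithmetic operations used by the
   transformer, each returning a value of F.  [fsum] is the (fixed-precision)
   finite sum, [fofnat D] the value of the integer D in F (used for sqrt D),
   [fln D] columnwise layer normalization of a width-D column. *)
Record fpmodel := FPModel {
  fpT :> finType;
  f0 : fpT; f1 : fpT; fm1 : fpT; fpinf : fpT; fninf : fpT;
  flt : rel fpT;
  fadd : fpT -> fpT -> fpT;
  fmul : fpT -> fpT -> fpT;
  fdiv : fpT -> fpT -> fpT;
  fsqrt : fpT -> fpT;
  fexp : fpT -> fpT;
  frelu : fpT -> fpT;
  fsum : seq fpT -> fpT;
  fofnat : nat -> fpT;
  fln : forall D : nat, ('I_D -> fpT) -> 'I_D -> fpT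
}.

Definition fnonneg (M : fpmodel) (v : M) : bool := ~~ flt v (f0 M).
Definition ffinite (M : fpmodel) (v : M) : bool := (v != fpinf M) && (v != fninf M).

Definition fp_axioms (M : fpmodel) : Prop :=
  [/\ (forall a : M, ~~ flt a a),
      (forall a b c : M, flt a b -> flt b c -> flt a c),
      (forall a b : M, [|| flt a b, a == b | flt b a]),
      (forall a, a != fninf M -> flt (fninf M) a) &
      (forall a, a != fpinf M -> flt a (fpinf M)) /\
      flt (fm1 M) (f0 M) /\ flt (f0 M) (f1 M)]
  /\
  [/\ (forall f, f != fninf M -> fadd (fpinf M) f = fpinf M),
      (forall f, f != fpinf M -> fadd (fninf M) f = fninf M),
      (forall f, flt (f0 M) f ->
          fmul f (fpinf M) = fpinf M /\ fmul f (fninf M) = fninf M) /\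
      (forall f, flt f (f0 M) ->
          fmul f (fpinf M) = fninf M /\ fmul f (fninf M) = fpinf M),
      (forall f, ffinite f -> fdiv f (fpinf M) = f0 M) /\
      fexp (fpinf M) = fpinf M /\ fexp (fninf M) = f0 M &
      (forall f, frelu f = if flt (f0 M) f then f else f0 M)]
  /\
  [/\ (forall f : M, fnonneg (fexp f)),
      (forall f, fmul (f0 M) f = f0 M),
      (forall s, fsum s = fsum [seq v <- s | v != f0 M]),
      (exists K : nat, forall s t : seq M,
          all (@fnonneg M) s -> all (@fnonneg M) t ->
          (forall v, minn (count_mem v s) K = minn (count_mem v t) K) ->
          fsum s = fsum t) &
      (exists N : nat, forall s : seq M,
          count (fun v => fdiv (fexp v) (fsum (map (@fexp M) s)) != f0 M) s
            <= N)].

(* bar Sigma = option Sigma, with None = EOS. *)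
Definition wbar (Sig : Type) (w : seq Sig) : seq (option Sig) :=
  rcons (map Some w) None.

(* Layer-indexed parameters are functions of the layer index l (only
   l < L is used).  Dk = dimension of queries/keys, Dh l = hidden width of
   the feed-forward sublayer of layer l. *)
Record transformer (M : fpmodel) (Sig : finType) (D L : nat) := Transformer {
  emb : option Sig -> 'I_D -> M;
  Dk : nat;
  WQ : nat -> 'I_Dk -> 'I_D -> M;
  WK : nat -> 'I_Dk -> 'I_D -> M;
  WV : nat -> 'I_D -> 'I_D -> M;
  Dh : nat -> nat;
  WF1 : forall l, 'I_(Dh l) -> 'I_D -> M;
  bF1 : forall l, 'I_(Dh l) -> M;
  WF2 : forall l, 'I_D -> 'I_(Dh l) -> M;
  bF2 : nat -> 'I_D -> M;
  theta : 'I_D -> M;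
  bout : M
}.
Arguments WQ {M Sig D L} t _ _ _.
Arguments WK {M Sig D L} t _ _ _.
Arguments WV {M Sig D L} t _ _ _.
Arguments Dh {M Sig D L} t _.
Arguments WF1 {M Sig D L} t _ _ _.
Arguments bF1 {M Sig D L} t _ _.
Arguments WF2 {M Sig D L} t _ _ _.
Arguments Dk {M Sig D L} t.

Section Transformer.
Variables (M : fpmodel) (Sig : finType) (D L : nat) (T : transformer M Sig D L).

(* A matrix in F^{D x (N+1)} is represented by its columns n = 1..N+1. *)
Definition cols := nat -> 'I_D -> M.

Definition matvec (m k : nat) (W : 'I_m -> 'I_k -> M) (h : 'I_k -> M)
  : 'I_m -> M :=
  fun i => fsum [seq fmul (W i j) (h j) | j <- enum 'I_k].

Definition attn (l : nat) (H : cols) : cols :=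
  let Q n := matvec (WQ T l) (H n) in
  let K n := matvec (WK T l) (H n) in
  let V n := matvec (WV T l) (H n) in
  let S n m := fdiv (fsum [seq fmul (Q n i) (K m i) | i <- enum 'I_(Dk T)])
                    (fsqrt (fofnat M D)) in
  let alpha n m := fdiv (fexp (S n m))
                        (fsum [seq fexp (S n i) | i <- iota 1 n.-1]) in
  fun n d => fsum [seq fmul (alpha n m) (V m d) | m <- iota 1 n.-1].

Definition ffn (l : nat) (H : cols) : cols :=
  fun n d =>
    fadd (fsum [seq fmul (WF2 T l d j)
                 (frelu (fadd (matvec (WF1 T l) (H n) j) (bF1 T l j)))
               | j <- enum 'I_(Dh T l)])
         (bF2 T l d).

Definition resLN (G H : cols) : cols :=
  fun n => fln (fun d => fadd (G n d) (H n d)).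

(* hidden states H^(k/2) (x), k = 0, 1, ..., 2L : step k+1 is the attention
   sublayer of layer k/2 when k is even, its feed-forward sublayer when odd. *)
Fixpoint hstate (k : nat) (x : seq (option Sig)) : cols :=
  match k with
  | 0 => fun n d => emb T (nth None x n.-1) d
  | k'.+1 =>
      let H := hstate k' x in
      if odd k' then resLN (ffn k'./2 H) H else resLN (attn k'./2 H) H
  end.

Definition output (x : seq (option Sig)) : M :=
  fadd (fsum [seq fmul (theta T d) (hstate (2 * L) x (size x) d)
             | d <- enum 'I_D])
       (bout T).

Definition accepts (w : seq Sig) : bool := flt (f0 M) (output (wbar w)).

End Transformer.

Inductive var := vx | vy.

Definition other (v : var) : var := if v is vx then vy else vx.
Definition var_eqb (a b : var) : bool :=
  match a, b with vx, vx | vy, vy => true | _, _ => false end.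

Inductive pfo (A : Type) :=
  | PPi of A & var
  | PLt of var & var
  | PAnd of pfo A & pfo A
  | PNot of pfo A
  | PExLt of var & pfo A            (* exists b < other b : phi *)
  | PEx of var & pfo A.

Arguments PLt {A}.

Fixpoint free (A : Type) (phi : pfo A) (v : var) : bool :=
  match phi with
  | PPi _ z => var_eqb v z
  | PLt z z' => var_eqb v z || var_eqb v z'
  | PAnd p q => free p v || free q v
  | PNot p => free p v
  | PExLt b p => var_eqb v (other b) || (~~ var_eqb v b && free p v)
  | PEx b p => ~~ var_eqb v b && free p v
  end.

(* well-formed PFO^2 formulas: unbounded exists only over formulas whose
   only free variable is the quantified one *)
Fixpoint wf (A : Type) (phi : pfo A) : bool :=
  match phi with
  | PPi _ _ | PLt _ _ => true
  | PAnd p q => wf p && wf q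
  | PNot p => wf p
  | PExLt _ p => wf p
  | PEx b p => wf p && ~~ free p (other b)
  end.

Definition upd (e : var -> nat) (b : var) (p : nat) : var -> nat :=
  fun v => if var_eqb v b then p else e v.

(* semantics over positions 1..size x of the string x *)
Fixpoint sat (A : eqType) (x : seq A) (e : var -> nat) (phi : pfo A) : Prop :=
  match phi with
  | PPi a z => 1 <= e z <= size x /\ nth a x (e z).-1 = a
  | PLt z z' => e z < e z'
  | PAnd p q => sat x e p /\ sat x e q
  | PNot p => ~ sat x e p
  | PExLt b p => exists2 i, 1 <= i < e (other b) & sat x (upd e b i) p
  | PEx b p => exists2 i, 1 <= i <= size x & sat x (upd e b i) p
  end.

Definition formula1 (A : Type) (phi : pfo A) : Prop :=
  wf phi /\ ~~ free phi vy.
Definition sentence (A : Type) (phi : pfo A) : Prop :=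
  wf phi /\ ~~ free phi vx /\ ~~ free phi vy.

Definition sat1 (A : eqType) (x : seq A) (n : nat) (phi : pfo A) : Prop :=
  sat x (fun _ => n) phi.
Definition satS (A : eqType) (x : seq A) (phi : pfo A) : Prop :=
  sat x (fun _ => 1) phi.

Definition simulated (M : fpmodel) (Sig : finType) (D : nat)
    (G : seq (option Sig) -> nat -> 'I_D -> M) : Prop :=
  forall (d : 'I_D) (f : M), exists phi : pfo (option Sig),
    formula1 phi /\
    forall (w : seq Sig) (n : nat), 1 <= n <= size w + 1 ->
      (G (wbar w) n d = f <-> sat1 (wbar w) n phi).

Definition simulated_scalar (M : fpmodel) (Sig : finType)
    (o : seq (option Sig) -> M) : Prop :=
  forall f : M, exists phi : pfo (option Sig),
    formula1 phi /\
    forall w : seq Sig, (o (wbar w) = f <-> sat1 (wbar w) (size w + 1) phi).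

(* Main.v *)
Require Import Defs.
From mathcomp Require Import all_boot.
From mathcomp Require Import zify.
From Stdlib Require Import Classical FunctionalExtensionality.

Set Implicit Arguments.
Unset Strict Implicit.
Unset Printing Implicit Defensive.

Lemma var_eqb_refl v : var_eqb v v.
Proof. by case: v. Qed.

Lemma var_eqbP a b : reflect (a = b) (var_eqb a b).
Proof. by case: a; case: b; constructor. Qed.

Lemma other_other v : other (other v) = v.
Proof. by case: v. Qed.

Lemma var_eqb_other a b : var_eqb (other a) (other b) = var_eqb a b.
Proof. by case: a; case: b. Qed.

Lemma sat_ext (A : eqType) (x : seq A) (phi : pfo A) e1 e2 :
  (forall v, free phi v -> e1 v = e2 v) -> (sat x e1 phi <-> sat x e2 phi).
Proof.
elim: phi e1 e2 => [a z|z z'|p IHp q IHq|p IHp|b p IHp|b p IHp] e1 e2 He /=.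
- by rewrite He //= var_eqb_refl.
- by rewrite !He //= var_eqb_refl ?orbT.
- rewrite (IHp e1 e2) ?(IHq e1 e2) //.
  + by move=> v Hv; apply: He => /=; rewrite Hv orbT.
  + by move=> v Hv; apply: He => /=; rewrite Hv.
- rewrite (IHp e1 e2) //.
- have Ho : e1 (other b) = e2 (other b) by apply: He => /=; rewrite var_eqb_refl.
  rewrite Ho.
  have Hu : forall i v, free p v -> upd e1 b i v = upd e2 b i v.
    move=> i v Hv; rewrite /upd; case: (boolP (var_eqb v b)) => Hvb //.
    by apply: He => /=; rewrite Hvb Hv orbT.
  by split=> -[i Hi Hs]; exists i => //; move: Hs; apply IHp => v Hv;
   first [by apply: Hu | by symmetry; apply: Hu].
- have Hu : forall i v, free p v -> upd e1 b i v = upd e2 b i v.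
    move=> i v Hv; rewrite /upd; case: (boolP (var_eqb v b)) => Hvb //.
    by apply: He => /=; rewrite Hvb Hv.
  by split=> -[i Hi Hs]; exists i => //; move: Hs; apply IHp => v Hv;
   first [by apply: Hu | by symmetry; apply: Hu].
Qed.

Fixpoint sw (A : Type) (phi : pfo A) : pfo A :=
  match phi with
  | PPi a z => PPi a (other z)
  | PLt z z' => PLt (other z) (other z')
  | PAnd p q => PAnd (sw p) (sw q)
  | PNot p => PNot (sw p)
  | PExLt b p => PExLt (other b) (sw p)
  | PEx b p => PEx (other b) (sw p)
  end.

Lemma free_sw (A : Type) (phi : pfo A) v : free (sw phi) v = free phi (other v).
Proof.
elim: phi v => [a z|z z'|p IHp q IHq|p IHp|b p IHp|b p IHp] v /=;
  rewrite ?IHp ?IHq.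
all: try by [].
all: case: v; case: z || case: b; try case: z'; by [].
Qed.

Lemma wf_sw (A : Type) (phi : pfo A) : wf (sw phi) = wf phi.
Proof.
elim: phi => [a z|z z'|p IHp q IHq|p IHp|b p IHp|b p IHp] //=; rewrite ?IHp ?IHq //.
by rewrite free_sw other_other.
Qed.

Lemma sat_sw (A : eqType) (x : seq A) (phi : pfo A) e :
  sat x e (sw phi) <-> sat x (fun v => e (other v)) phi.
Proof.
elim: phi e => [a z|z z'|p IHp q IHq|p IHp|b p IHp|b p IHp] e /=.
- by [].
- by [].
- by rewrite IHp IHq.
- by rewrite IHp.
- rewrite other_other.
  have E : forall i, (fun v => upd e (other b) i (other v)) = upd (fun v => e (other v)) b i.
    by move=> i; apply: functional_extensionality => v; rewrite /upd var_eqb_other.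
  by split=> -[i Hi Hs]; exists i => //; move: Hs; rewrite IHp E.
- have E : forall i, (fun v => upd e (other b) i (other v)) = upd (fun v => e (other v)) b i.
    by move=> i; apply: functional_extensionality => v; rewrite /upd var_eqb_other.
  by split=> -[i Hi Hs]; exists i => //; move: Hs; rewrite IHp E.
Qed.

Lemma sat1_formula1 (A : eqType) (x : seq A) (phi : pfo A) e :
  ~~ free phi vy -> (sat x e phi <-> sat1 x (e vx) phi).
Proof.
move=> Hf; apply: sat_ext => -[] // Hv.
by rewrite Hv in Hf.
Qed.

Lemma size_wbar (Sig : Type) (w : seq Sig) : size (wbar w) = size w + 1.
Proof. by rewrite /wbar size_rcons size_map addn1. Qed.

Definition Before (A : Type) (phi : pfo A) : pfo A := PExLt vy (sw phi).
Definition PTrue (A : Type) : pfo A := PNot (PLt vx vx).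
Definition POr (A : Type) (p q : pfo A) : pfo A := PNot (PAnd (PNot p) (PNot q)).

Lemma sat1_Before (A : eqType) (x : seq A) n (phi : pfo A) :
  ~~ free phi vy ->
  (sat1 x n (Before phi) <-> exists2 i, 1 <= i < n & sat1 x i phi).
Proof.
move=> Hf; rewrite /sat1 /Before /=.
have E : forall i, sat x (upd (fun=> n) vy i) (sw phi) <-> sat1 x i phi.
  by move=> i; rewrite sat_sw sat1_formula1.
by split=> -[i Hi Hs]; exists i => //; move: Hs; rewrite E.
Qed.

Section Definable.
Variable Sig : finType.
Notation X := (seq (option Sig)).

Definition Def (P : X -> nat -> Prop) : Prop :=
  exists phi : pfo (option Sig), formula1 phi /\
    forall w n, 1 <= n <= size w + 1 -> (P (wbar w) n <-> sat1 (wbar w) n phi).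

Lemma Def_iff (P Q : X -> nat -> Prop) :
  Def P -> (forall w n, 1 <= n <= size w + 1 -> (P (wbar w) n <-> Q (wbar w) n)) ->
  Def Q.
Proof.
move=> [phi [Hphi H]] HPQ; exists phi; split=> // w n Hn.
by rewrite -HPQ // H.
Qed.

Lemma Def_and P Q : Def P -> Def Q -> Def (fun x n => P x n /\ Q x n).
Proof.
move=> [p [[wp fp] Hp]] [q [[wq fq] Hq]]; exists (PAnd p q); split.
  by split; rewrite /= ?wp ?wq //= negb_or fp fq.
by move=> w n Hn; rewrite /sat1 /= -/(sat1 _ n p) -/(sat1 _ n q) -Hp // -Hq.
Qed.

Lemma Def_not P : Def P -> Def (fun x n => ~ P x n).
Proof.
move=> [p [[wp fp] Hp]]; exists (PNot p); split; first by split.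
by move=> w n Hn; rewrite /sat1 /= -/(sat1 _ n p) -Hp.
Qed.

Lemma Def_true : Def (fun _ _ => True).
Proof.
exists (PTrue _); split; first by [].
by move=> w n Hn; rewrite /sat1 /=; split=> // _; rewrite ltnn.
Qed.

Lemma Def_false : Def (fun _ _ => False).
Proof.
apply: Def_iff (Def_not Def_true) _ => w n _; tauto.
Qed.

Lemma Def_or P Q : Def P -> Def Q -> Def (fun x n => P x n \/ Q x n).
Proof.
move=> HP HQ; apply: Def_iff (Def_not (Def_and (Def_not HP) (Def_not HQ))) _.
move=> w n _; tauto.
Qed.

Lemma Def_before P : Def P -> Def (fun x n => exists2 i, 1 <= i < n & P x i).
Proof.
move=> [p [[wp fp] Hp]]; exists (Before p); split.
  split; rewrite /= ?wf_sw // free_sw //.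
move=> w n Hn; rewrite sat1_Before //.
split=> -[i Hi Hs]; exists i => //; move: Hs; rewrite Hp //;
  case/andP: Hi => Hi1 Hi2; rewrite Hi1 /=; case/andP: Hn => _ Hn; 
  apply: leq_trans (ltnW Hi2) Hn.
Qed.

Lemma Def_pi (a : option Sig) : Def (fun x n => nth None x n.-1 = a).
Proof.
exists (PPi a vx); split; first by [].
move=> w n /andP [Hn1 Hn2]; rewrite /sat1 /=.
have Hs : size (wbar w) = size w + 1 by exact: size_wbar.
rewrite (set_nth_default None); last by rewrite Hs; case: n Hn1 Hn2 => //= n _; rewrite addn1.
rewrite Hs Hn1 Hn2; split => // -[] //.
Qed.

Lemma Def_forall_seq (I : eqType) (l : seq I) (P : I -> X -> nat -> Prop) :
  (forall t, Def (P t)) -> Def (fun x n => forall t, t \in l -> P t x n).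
Proof.
move=> HP; elim: l => [|t l IH].
  by apply: Def_iff Def_true _ => w n _; split.
apply: Def_iff (Def_and (HP t) IH) _ => w n _; split.
  by move=> [H1 H2] t'; rewrite in_cons => /orP [/eqP -> | /H2].
by move=> H; split => [|t' Ht']; apply: H; rewrite in_cons ?eqxx ?Ht' ?orbT.
Qed.

Lemma Def_forall (I : finType) (P : I -> X -> nat -> Prop) :
  (forall t, Def (P t)) -> Def (fun x n => forall t, P t x n).
Proof.
move=> HP; apply: Def_iff (Def_forall_seq (enum I) HP) _ => w n _; split.
  by move=> H t; apply: H; rewrite mem_enum.
by move=> H t _.
Qed.

Lemma Def_exists (I : finType) (P : I -> X -> nat -> Prop) :
  (forall t, Def (P t)) -> Def (fun x n => exists t, P t x n).
Proof.
move=> HP; apply: Def_iff (Def_not (Def_forall (fun t => Def_not (HP t)))) _.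
move=> w n _; split.
  by move=> H; apply: NNPP => H'; apply: H => t Ht; apply: H'; exists t.
by move=> [t Ht] H; exact: H t Ht.
Qed.

End Definable.

Lemma iota1S k : iota 1 k.+1 = rcons (iota 1 k) k.+1.
Proof. by have := iotaD 1 k 1; rewrite addn1 add1n cats1. Qed.

Lemma count_iota_has (p : nat -> bool) j k :
  (j.+1 <= count p (iota 1 k)) =
  has (fun i => p i && (j <= count p (iota 1 i.-1))) (iota 1 k).
Proof.
elim: k => [|k IH] //.
rewrite iota1S -cats1 count_cat has_cat -IH /= addn0 orbF.
case: (p k.+1) => /=; last by rewrite addn0 ?orbF.
rewrite addn1 ltnS.
by case: (leqP j.+1 (count p (iota 1 k))) => H /=; [apply: ltnW|].
Qed.

Section DefFun.
Variable Sig : finType.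
Notation X := (seq (option Sig)).

Definition DefF (K : eqType) (G : X -> nat -> K) :=
  forall c, Def (fun x n => G x n = c).

Lemma classify_seq (K : eqType) (G : X -> nat -> K) (l : seq K) (P : K -> Prop) :
  (forall c, c \in l -> Def (fun x n => G x n = c)) ->
  Def (fun x n => G x n \in l /\ P (G x n)).
Proof.
elim: l => [|c l IH] HG.
  by apply: Def_iff (@Def_false Sig) _ => w n _; split => // -[].
have IH' := IH (fun c' Hc => HG c' (@mem_behead _ (c :: l) _ Hc)).
have Hc := HG c (mem_head _ _).
case: (classic (P c)) => HPc.
  apply: Def_iff (Def_or Hc IH') _ => w n _; rewrite in_cons; split.
    by move=> [->|[H1 H2]]; [rewrite eqxx | rewrite H1 orbT].
  move=> [/orP [/eqP ->|H1] H2]; [by left | by right].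
apply: Def_iff IH' _ => w n _; rewrite in_cons; split.
  by move=> [H1 H2]; rewrite H1 orbT.
by move=> [/orP [/eqP E|H1] H2]; [by rewrite E in H2 | ].
Qed.

Lemma classify (K : finType) (G : X -> nat -> K) (P : K -> Prop) :
  DefF G -> Def (fun x n => P (G x n)).
Proof.
move=> HG; have H := @classify_seq K G (enum K) P (fun c _ => HG c).
apply: Def_iff H _ => w n _; rewrite mem_enum; split => [[]|] //.
Qed.

Lemma DefF_comp (K : finType) (K' : eqType) (g : K -> K') (G : X -> nat -> K) :
  DefF G -> DefF (fun x n => g (G x n)).
Proof. by move=> HG c; apply: (classify (fun k => g k = c) HG). Qed.

Lemma DefF_pair (K1 K2 : eqType) (G1 : X -> nat -> K1) (G2 : X -> nat -> K2) :
  DefF G1 -> DefF G2 -> DefF (fun x n => (G1 x n, G2 x n)).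
Proof.
move=> H1 H2 [a b]; apply: Def_iff (Def_and (H1 a) (H2 b)) _ => w n _; split.
  by move=> [-> ->].
by case.
Qed.

Variable Pb : X -> nat -> bool.
Hypothesis HPb : Def (fun x n => Pb x n).

Lemma Def_atleast j : Def (fun x n => j <= count (Pb x) (iota 1 n.-1)).
Proof.
elim: j => [|j IH].
  by apply: Def_iff (@Def_true Sig) _.
apply: Def_iff (Def_before (Def_and HPb IH)) _ => w n /andP [Hn _].
rewrite count_iota_has; split.
  move=> [i Hi [H1 H2]]; apply/hasP; exists i; last by rewrite H1.
  by rewrite mem_iota; case: n Hn Hi.
move=> /hasP [i]; rewrite mem_iota => Hi /andP [H1 H2]; exists i => //.
by case: n Hn Hi.
Qed.

Lemma Def_cnt_eq k : Def (fun x n => count (Pb x) (iota 1 n.-1) = k).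
Proof.
apply: Def_iff (Def_and (Def_atleast k) (Def_not (Def_atleast k.+1))) _.
move=> w n _; split.
  by move=> [H1 H2]; apply/eqP; rewrite eqn_leq H1 andbT leqNgt; apply/negP.
by move=> ->; rewrite leqnn ltnn.
Qed.

Lemma Def_const (Q : Prop) : Def (fun (_ : X) (_ : nat) => Q).
Proof.
case: (classic Q) => HQ.
  by apply: Def_iff (@Def_true Sig) _.
by apply: Def_iff (@Def_false Sig) _.
Qed.

Lemma Def_mincnt j v : Def (fun x n => minn (count (Pb x) (iota 1 n.-1)) j = v).
Proof.
apply: Def_iff (Def_and (Def_const (v <= j))
  (Def_and (Def_atleast v) (Def_or (Def_const (v = j)) (Def_not (Def_atleast v.+1))))) _.
move=> w n _; set c := count _ _; split.
  move=> [H1 [H2 [H3|H3]]]; first by subst; lia.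
  by move/negP: H3; rewrite -ltnNge; lia.
move=> <-; split; first by lia.
split; first by lia.
case: (leqP j c) => H; [left|right]; lia.
Qed.

End DefFun.

Lemma count_iota_mono (p : nat -> bool) a b :
  a <= b -> count p (iota 1 a) <= count p (iota 1 b).
Proof.
move=> Hab; rewrite -(subnKC Hab) iotaD count_cat; exact: leq_addr.
Qed.

Lemma Fs_nil (C : Type) (p : pred nat) (f : nat -> C) k :
  [seq f m | m <- iota 1 k & p m] = [::] <-> count p (iota 1 k) = 0.
Proof.
rewrite -size_filter -(size_map f); split => [->|] // H.
by move: H; case: (map f _).
Qed.

Lemma Fs_rcons (C : Type) (p : pred nat) (f : nat -> C) k s c :
  [seq f m | m <- iota 1 k & p m] = rcons s c <->
  count p (iota 1 k) = (size s).+1 /\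
  exists2 m, 1 <= m <= k & [/\ f m = c, p m & [seq f m' | m' <- iota 1 m.-1 & p m'] = s].
Proof.
elim: k => [|k IH].
  split; first by case: s.
  by move=> [_ [m /andP [H1 H2]]]; move: (leq_trans H1 H2).
have Hcnt : count p (rcons (iota 1 k) k.+1) = count p (iota 1 k) + p k.+1.
  by rewrite -cats1 count_cat /= addn0.
rewrite iota1S filter_rcons Hcnt.
case Hp: (p k.+1) => /=.
  rewrite map_rcons addn1; split.
    move=> E; have [E1 E2] := rcons_inj E.
    split; first by rewrite -E1 size_map size_filter.
    by exists k.+1; [rewrite leqnn | split].
  move=> [Hc [m /andP [H1 H2] [Hf Hpm Hs]]].
  case: (ltngtP m k.+1) => Hm.
    have : count p (iota 1 m) <= count p (iota 1 k) by apply: count_iota_mono.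
    case: m H1 H2 Hm Hf Hpm Hs => // m _ _ _ Hf Hpm Hs.
    have -> : count p (iota 1 m.+1) = (size s).+1.
      by rewrite iota1S -cats1 count_cat /= Hpm -Hs size_map size_filter addn1.
    by move: Hc => [->]; rewrite ltnn.
  - by rewrite leqNgt Hm in H2.
  - by subst m; rewrite /= in Hs; rewrite Hs Hf.
rewrite addn0 IH; split.
  by move=> [Hc [m Hm HH]]; split=> //; exists m => //; case/andP: Hm => -> /= Hm;
     apply: leqW.
move=> [Hc [m /andP [H1 H2] [Hf Hpm Hs]]]; split => //; exists m => //.
rewrite H1 /=; rewrite leq_eqVlt in H2; case/orP: H2 => [/eqP E|]; last by [].
by subst m; rewrite Hp in Hpm.
Qed.

Section DefSeq.
Variable Sig : finType.
Notation X := (seq (option Sig)).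
Variable C : finType.
Variable G : X -> nat -> C.
Hypothesis HG : DefF G.

Lemma Def_fs (Zc : C -> bool) s :
  Def (fun x n => [seq G x m | m <- iota 1 n.-1 & Zc (G x m)] = s).
Proof.
have HZ : Def (fun x n => Zc (G x n)) := classify (fun k => Zc k) HG.
elim/last_ind: s => [|s c IH].
  apply: Def_iff (Def_cnt_eq HZ 0) _ => w n _.
  by rewrite (Fs_nil (fun m => Zc (G (wbar w) m)) (G (wbar w))).
apply: Def_iff (Def_and (Def_cnt_eq HZ (size s).+1)
   (Def_before (Def_and (HG c) (Def_and (Def_const Sig (Zc c)) IH)))) _.
move=> w n /andP [Hn _].
rewrite (Fs_rcons (fun m => Zc (G (wbar w) m)) (G (wbar w))).
have Hr : forall m, (0 < m < n) = (0 < m <= n.-1) by move=> m; case: n Hn.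
split => -[H1 [m Hm H2]]; split => //; exists m.
- by rewrite -Hr.
- by case: H2 => <- [H3 H4].
- by rewrite Hr.
- by case: H2 => H3 H4 H5; rewrite H3 in H4.
Qed.

End DefSeq.

Definition tvec (Sig : finType) (I : finType) (Pbs : I -> seq (option Sig) -> nat -> bool)
  (j : nat) (x : seq (option Sig)) (n : nat) : {ffun I -> 'I_j.+1} :=
  [ffun t => inord (minn (count (Pbs t x) (iota 1 n.-1)) j)].

Lemma DefF_tvec (Sig : finType) (I : finType) (Pbs : I -> seq (option Sig) -> nat -> bool) j :
  (forall t, Def (fun x n => Pbs t x n)) -> DefF (tvec Pbs j).
Proof.
move=> HP f.
apply: Def_iff (Def_forall (fun t => Def_mincnt (HP t) j (f t))) _ => w n _.
split.
  move=> H; apply/ffunP => t; apply: val_inj; rewrite /tvec ffunE /= -(H t).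
  by rewrite inordK // ltnS geq_minr.
move=> <- t; rewrite /tvec ffunE /= inordK // ltnS geq_minr //.
Qed.

Fixpoint allseq (C : finType) (k : nat) : seq (seq C) :=
  if k is k'.+1 then [::] :: [seq c :: s | c <- enum C, s <- allseq C k']
  else [:: [::]].

Lemma mem_allseq (C : finType) k (s : seq C) : size s <= k -> s \in allseq C k.
Proof.
elim: k s => [|k IH] [|c s] //= Hs.
rewrite in_cons /=; apply: (allpairs_f (fun c s => c :: s)); first by rewrite mem_enum.
exact: IH.
Qed.

Lemma DefF_ext (Sig : finType) (K : eqType) (G1 G2 : seq (option Sig) -> nat -> K) :
  (forall x n, G1 x n = G2 x n) -> DefF G1 -> DefF G2.
Proof.
move=> E H c; apply: Def_iff (H c) _ => w n _; by rewrite E.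
Qed.

Section Trans.
Variables (M : fpmodel) (Sig : finType) (D L : nat) (T : transformer M Sig D L).
Notation X := (seq (option Sig)).
Notation Cv := {ffun 'I_D -> M}.

Definition colv (H : nat -> 'I_D -> M) (n : nat) : Cv := [ffun d => H n d].

Lemma colv_eta (H : nat -> 'I_D -> M) : H = fun m d => colv H m d.
Proof.
by apply: functional_extensionality => m; apply: functional_extensionality => d;
  rewrite ffunE.
Qed.

Definition gLN (p : Cv * Cv) : Cv :=
  [ffun d => fln (fun d' => fadd (p.1 d') (p.2 d')) d].

Lemma colv_resLN (A B : nat -> 'I_D -> M) n :
  colv (resLN A B) n = gLN (colv A n, colv B n).
Proof.
apply/ffunP => d; rewrite !ffunE /resLN /=.
by congr fln; apply: functional_extensionality => d'; rewrite !ffunE.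
Qed.

Definition gF (l : nat) (c : Cv) : Cv := [ffun d => ffn T l (fun _ d' => c d') 0 d].

Lemma colv_ffn l (H : nat -> 'I_D -> M) n : colv (ffn T l H) n = gF l (colv H n).
Proof.
apply/ffunP => d; rewrite !ffunE.
have -> : ffn T l H n d = ffn T l (fun _ => H n) 0 d by [].
congr ffn; apply: functional_extensionality => _;
  apply: functional_extensionality => d'; by rewrite ffunE.
Qed.

Section Attn.
Variable l : nat.

Definition sc (u c : Cv) : M :=
  fdiv (fsum [seq fmul (matvec (WQ T l) u i) (matvec (WK T l) c i) | i <- enum 'I_(Dk T)])
       (fsqrt (fofnat M D)).
Definition ex (u c : Cv) : M := fexp (sc u c).
Definition dn (G' : nat -> Cv) (n : nat) : M :=
  fsum [seq ex (G' n) (G' i) | i <- iota 1 n.-1].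
Definition fsq (u : Cv) (dv : M) (G' : nat -> Cv) (n : nat) : seq Cv :=
  [seq G' m | m <- iota 1 n.-1 & fdiv (ex u (G' m)) dv != f0 M].
Definition Aval (u : Cv) (dv : M) (s : seq Cv) : Cv :=
  [ffun d => fsum [seq fmul (fdiv (ex u c) dv) (matvec (WV T l) c d) | c <- s]].

Hypothesis Hfs : forall s : seq M, fsum s = fsum [seq v <- s | v != f0 M].
Hypothesis Hm0 : forall f : M, fmul (f0 M) f = f0 M.

Lemma fsum_weights (a b : nat -> M) (s : seq nat) :
  fsum [seq fmul (a m) (b m) | m <- s] = fsum [seq fmul (a m) (b m) | m <- s & a m != f0 M].
Proof.
rewrite Hfs [RHS]Hfs; congr fsum.
elim: s => [|m s IH] //=.
case: (eqVneq (a m) (f0 M)) => Ha /=; last by rewrite IH.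
by rewrite Ha Hm0 eqxx /= IH.
Qed.

Lemma attn_eq (G' : nat -> Cv) n :
  colv (attn T l (fun m d => G' m d)) n = Aval (G' n) (dn G' n) (fsq (G' n) (dn G' n) G' n).
Proof.
apply/ffunP => d; rewrite !ffunE.
have -> : attn T l (fun m d => G' m d) n d =
  fsum [seq fmul (fdiv (ex (G' n) (G' m)) (dn G' n)) (matvec (WV T l) (G' m) d)
       | m <- iota 1 n.-1] by [].
rewrite fsum_weights /fsq -map_comp; congr fsum.
Qed.

End Attn.
End Trans.

Section AttnDef.
Variables (M : fpmodel) (Sig : finType) (D L : nat) (T : transformer M Sig D L) (l : nat).
Notation X := (seq (option Sig)).
Notation Cv := {ffun 'I_D -> M}.
Hypothesis Hfs : forall s : seq M, fsum s = fsum [seq v <- s | v != f0 M].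
Hypothesis Hm0 : forall f : M, fmul (f0 M) f = f0 M.
Hypothesis Hnn : forall f : M, fnonneg (fexp f).
Variable K0 : nat.
Hypothesis HK : forall s t : seq M,
          all (@fnonneg M) s -> all (@fnonneg M) t ->
          (forall v, minn (count_mem v s) K0 = minn (count_mem v t) K0) ->
          fsum s = fsum t.
Variable N : nat.
Hypothesis HN : forall s : seq M,
          count (fun v => fdiv (fexp v) (fsum (map (@fexp M) s)) != f0 M) s <= N.

Variable G : X -> nat -> Cv.
Hypothesis HG : DefF G.

Definition Pbs (u0 : Cv) (v : M) (x : X) (i : nat) : bool := ex T l u0 (G x i) == v.

Lemma den_inv u0 x n x' n' :
  tvec (Pbs u0) K0 x n = tvec (Pbs u0) K0 x' n' ->
  fsum [seq ex T l u0 (G x i) | i <- iota 1 n.-1] =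
  fsum [seq ex T l u0 (G x' i) | i <- iota 1 n'.-1].
Proof.
move=> E; apply: HK.
- by apply/allP => v /mapP [i _ ->]; exact: Hnn.
- by apply/allP => v /mapP [i _ ->]; exact: Hnn.
move=> v; have := congr1 (fun f : {ffun M -> 'I_K0.+1} => nat_of_ord (f v)) E.
rewrite /tvec !ffunE /=.
rewrite !inordK ?ltnS ?geq_minr //.
by rewrite !count_map.
Qed.

Lemma DefF_den : DefF (fun x n => dn T l (G x) n).
Proof.
move=> dv.
pose P u0 (t : {ffun M -> 'I_K0.+1}) := exists x' n', tvec (Pbs u0) K0 x' n' = t /\
   fsum [seq ex T l u0 (G x' i) | i <- iota 1 n'.-1] = dv.
have HPb : forall u0 v, Def (fun x n => Pbs u0 v x n).
  by move=> u0 v; apply: (classify (fun c => ex T l u0 c == v) HG).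
have H : Def (fun x n => exists u0, G x n = u0 /\ P u0 (tvec (Pbs u0) K0 x n)).
  apply: Def_exists => u0; apply: Def_and (HG u0) _.
  exact: (classify (P u0) (@DefF_tvec Sig (fpT M) (Pbs u0) K0 (HPb u0))).
apply: Def_iff H _ => w n _; split.
  move=> [u0 [Hu [x' [n' [Et Ed]]]]].
  by rewrite /dn Hu -(den_inv Et).
move=> Ed; exists (G (wbar w) n); split => //; exists (wbar w), n; split => //.
Qed.

Lemma fsq_size x n : size (fsq T l (G x n) (dn T l (G x) n) (G x) n) <= N.
Proof.
have := HN [seq sc T l (G x n) (G x i) | i <- iota 1 n.-1].
rewrite -map_comp.
have -> : fsum [seq (@fexp M \o (fun i => sc T l (G x n) (G x i))) i | i <- iota 1 n.-1]
   = dn T l (G x) n by [].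
by rewrite count_map /fsq size_map size_filter.
Qed.

Lemma DefF_attn : DefF (fun x n => colv (attn T l (fun m d => G x m d)) n).
Proof.
move=> v.
have H : Def (fun x n => exists p : Cv * M, G x n = p.1 /\ (dn T l (G x) n = p.2 /\
   (fsq T l p.1 p.2 (G x) n \in allseq Cv N /\ Aval T l p.1 p.2 (fsq T l p.1 p.2 (G x) n) = v))).
  apply: Def_exists => -[u0 dv] /=.
  apply: Def_and (HG u0) (Def_and (DefF_den dv) _).
  have := @classify_seq Sig _ (fun x n => fsq T l u0 dv (G x) n) (allseq Cv N)
            (fun s => Aval T l u0 dv s = v)
     (fun s _ => Def_fs HG (fun c => fdiv (ex T l u0 c) dv != f0 M) s).
  exact.
apply: Def_iff H _ => w n _; rewrite (attn_eq T l Hfs Hm0); split.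
  move=> [[u0 dv] /= [Hu [Hd [_ E]]]]; by rewrite -Hu -Hd in E.
move=> E; exists (G (wbar w) n, dn T l (G (wbar w)) n) => /=; split => //; split => //.
split => //; apply: mem_allseq; exact: fsq_size.
Qed.

End AttnDef.

Lemma wbar_last (Sig : eqType) (w : seq Sig) j :
  j < size w + 1 -> nth None (wbar w) j = None -> j = size w.
Proof.
rewrite /wbar nth_rcons size_map addn1 ltnS leq_eqVlt => /orP [/eqP //|Hj].
rewrite Hj => E.
have : nth None (map Some w) j \in map Some w by rewrite mem_nth // size_map.
by rewrite E => /mapP [y _].
Qed.

Lemma wbar_nth_last (Sig : Type) (w : seq Sig) : nth None (wbar w) (size w) = None.
Proof. by rewrite /wbar nth_rcons size_map ltnn eqxx. Qed.

Section Main.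
Variables (M : fpmodel) (Sig : finType) (D L : nat) (T : transformer M Sig D L).
Notation X := (seq (option Sig)).
Notation Cv := {ffun 'I_D -> M}.
Hypothesis Hfs : forall s : seq M, fsum s = fsum [seq v <- s | v != f0 M].
Hypothesis Hm0 : forall f : M, fmul (f0 M) f = f0 M.
Hypothesis Hnn : forall f : M, fnonneg (fexp f).
Variable K0 : nat.
Hypothesis HK : forall s t : seq M,
          all (@fnonneg M) s -> all (@fnonneg M) t ->
          (forall v, minn (count_mem v s) K0 = minn (count_mem v t) K0) ->
          fsum s = fsum t.
Variable N : nat.
Hypothesis HN : forall s : seq M,
          count (fun v => fdiv (fexp v) (fsum (map (@fexp M) s)) != f0 M) s <= N.

Lemma DefF_hstate k : DefF (fun x n => colv (hstate T k x) n).
Proof.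
elim: k => [|k IH].
  have H0 : DefF (fun (x : X) n => nth None x n.-1) by move=> a; exact: Def_pi.
  have H1 := DefF_comp (fun a => [ffun d => emb T a d] : Cv) H0.
  by move=> c; apply: Def_iff (H1 c) _ => w n _.
have E : forall x, hstate T k.+1 x = (if odd k
    then resLN (ffn T k./2 (hstate T k x)) (hstate T k x)
    else resLN (attn T k./2 (hstate T k x)) (hstate T k x)) by [].
case Ho: (odd k).
  have H1 := DefF_comp (@gLN M D) (DefF_pair (DefF_comp (gF T k./2) IH) IH).
  by move=> c; apply: Def_iff (H1 c) _ => w n _; rewrite E Ho colv_resLN colv_ffn.
have HA := DefF_attn T k./2 Hfs Hm0 Hnn HK HN IH.
have H1 := DefF_comp (@gLN M D) (DefF_pair HA IH).
move=> c; apply: Def_iff (H1 c) _ => w n _; rewrite E Ho colv_resLN /=.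
by rewrite -colv_eta.
Qed.

End Main.

Definition og (M : fpmodel) (Sig : finType) (D L : nat) (T : transformer M Sig D L)
  (c : {ffun 'I_D -> M}) : M :=
  fadd (fsum [seq fmul (theta T d) (c d) | d <- enum 'I_D]) (bout T).

Lemma output_og (M : fpmodel) (Sig : finType) (D L : nat) (T : transformer M Sig D L) x :
  output T x = og T (colv (hstate T (2 * L) x) (size x)).
Proof.
rewrite /output /og; congr fadd; congr fsum; apply: eq_map => d; by rewrite ffunE.
Qed.

Theorem mainTheorem5 (M : fpmodel) (Sig : finType) (D L : nat)
    (T : transformer M Sig D L) :
  fp_axioms M ->
  (forall k, k <= 2 * L -> simulated (hstate T k)) /\
  simulated_scalar (output T) /\
  (exists sigma : pfo (option Sig), sentence sigma /\
     forall w : seq Sig, accepts T w <-> satS (wbar w) sigma).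
Proof.
move=> Hax; have [_ [_ [Hnn Hm0 Hfs [K0 HK] [N HN]]]] := Hax.
have HD := DefF_hstate T Hfs Hm0 Hnn HK HN.
split.
  move=> k _ d f.
  have H1 := DefF_comp (fun c : {ffun 'I_D -> M} => c d) (HD k) f.
  suff : Def (fun x n => hstate T k x n d = f) by [].
  by apply: Def_iff H1 _ => w n _; rewrite ffunE.
have Hlast : forall w : seq Sig, 0 < size w + 1 <= size w + 1 by move=> w; rewrite addn1 leqnn.
have Hsz : forall w : seq Sig, size (wbar w) = size w + 1 by move=> w; exact: size_wbar.
split.
  move=> f.
  have [phi [Hphi Hs]] := classify (fun c => og T c = f) (HD (2 * L)).
  exists phi; split => // w.
  by rewrite -(Hs w _ (Hlast w)) output_og Hsz.
have [phi [[Hw Hf] Hs]] := classify (fun c => flt (f0 M) (og T c)) (HD (2 * L)).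
exists (PEx vx (PAnd (PPi None vx) phi)); split.
  by rewrite /sentence /= Hw Hf.
move=> w; rewrite /accepts /satS /=.
have E : forall i, sat (wbar w) (upd (fun _ => 1) vx i) phi <-> sat1 (wbar w) i phi.
  by move=> i; rewrite sat1_formula1.
split.
  move=> Hacc; exists (size w + 1); first by rewrite Hsz Hlast.
  split; first by rewrite Hsz Hlast addn1 /= wbar_nth_last.
  by rewrite E -(Hs w _ (Hlast w)) -Hsz -output_og.
move=> [i Hi [[Hi2 Hn] Hp]].
rewrite Hsz in Hi; move: Hn Hp => /=; rewrite E => Hn.
move=> Hp; rewrite /upd /= in Hn.
have Ei : i = size w + 1.
  case: i Hi Hn {Hi2 Hp} => // i Hi /= Hn.
  by rewrite (@wbar_last _ w i) // addn1.
subst i; rewrite output_og Hsz (Hs w _ (Hlast w)) //.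
Qed.
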